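(* Let $A$ be an arbitrary group. Then $A$ can be embedded into a group $G$ such that $PJ(G)=J_0(G)=X(G)$. Hence Jensen's functional equation $f(xy)+f(xy^{-1})=2f(x)$ is stable on $G$, i.e. for every function $f\colon G\to\mathbb{R}$ for which there is $c>0$ with $|f(xy)+f(xy^{-1})-2f(x)|\le c$ for all $x,y\in G$, there is $j\colon G\to\mathbb{R}$ with $j(xy)+j(xy^{-1})=2j(x)$ for all $x,y$ and $j-f$ bounded.
   Context: For a group $G$: a function $f\colon G\to\mathbb{R}$ is quasi-Jensen if there is $c>0$ with $|f(xy)+f(xy^{-1})-2f(x)|\le c$ for all $x,y\in G$; it is pseudo-Jensen if it is quasi-Jensen and $f(x^n)=nf(x)$ for all $x\in G$, $n\in\mathbb{Z}$. $PJ(G)$ is the space of real-valued pseudo-Jensen functions on $G$. $J_0(G)$ is the space of functions $f\colon G\to\mathbb{R}$ with $f(xy)+f(xy^{-1})=2f(x)$ for all $x,y\in G$ and $f(1)=0$. $X(G)$ is the space of homomorphisms $G\to(\mathbb{R},+)$. *)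

(* Defs.v *)
From Stdlib Require Import Reals ZArith.
Open Scope R_scope.

Record group_on (T : Type) := GroupOn {
  gmul : T -> T -> T;
  gone : T;
  ginv : T -> T;
  gmulA : forall x y z, gmul x (gmul y z) = gmul (gmul x y) z;
  gmul1g : forall x, gmul gone x = x;
  gmulVg : forall x, gmul (ginv x) x = gone
}.
Arguments gmul {T} g _ _.
Arguments gone {T} g.
Arguments ginv {T} g _.

Fixpoint gpow_nat {T} (g : group_on T) (x : T) (n : nat) : T :=
  match n with
  | O => gone g
  | S m => gmul g x (gpow_nat g x m)
  end.

Definition gpow {T} (g : group_on T) (x : T) (n : Z) : T :=
  match n with
  | Z0 => gone g
  | Zpos p => gpow_nat g x (Pos.to_nat p)
  | Zneg p => ginv g (gpow_nat g x (Pos.to_nat p))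
  end.

Definition group_hom {A G} (gA : group_on A) (gG : group_on G) (phi : A -> G) : Prop :=
  forall x y, phi (gmul gA x y) = gmul gG (phi x) (phi y).

Definition quasi_Jensen {G} (g : group_on G) (f : G -> R) : Prop :=
  exists c, 0 < c /\ forall x y,
    Rabs (f (gmul g x y) + f (gmul g x (ginv g y)) - 2 * f x) <= c.

Definition pseudo_Jensen {G} (g : group_on G) (f : G -> R) : Prop :=
  quasi_Jensen g f /\ forall x (n : Z), f (gpow g x n) = IZR n * f x.

Definition J0 {G} (g : group_on G) (f : G -> R) : Prop :=
  (forall x y, f (gmul g x y) + f (gmul g x (ginv g y)) = 2 * f x) /\ f (gone g) = 0.

Definition X_hom {G} (g : group_on G) (f : G -> R) : Prop :=
  forall x y, f (gmul g x y) = f x + f y.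

Definition is_Jensen {G} (g : group_on G) (j : G -> R) : Prop :=
  forall x y, j (gmul g x y) + j (gmul g x (ginv g y)) = 2 * j x.

Definition bounded_fun {G} (h : G -> R) : Prop := exists M, forall x, Rabs (h x) <= M.

(* Main.v *)
Require Import Defs.
From Stdlib Require Import Reals ZArith.
Open Scope R_scope.
From Stdlib Require Import Lia Lra FunctionalExtensionality Bool.

Section GL.
Context {T : Type} (g : group_on T).
Local Notation "x ** y" := (gmul g x y) (at level 40, left associativity).
Local Notation "1" := (gone g).
Local Notation inv := (ginv g).

Lemma mulgV' x : x ** inv x = 1.
Proof.
  assert (E : x ** inv x = (inv (inv x) ** inv x) ** (x ** inv x)) by (rewrite gmulVg, gmul1g; reflexivity).
  rewrite E, <- gmulA, (gmulA _ g (inv x) x (inv x)), gmulVg, gmul1g, gmulVg. reflexivity.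
Qed.

Lemma mulg1' x : x ** 1 = x.
Proof. rewrite <- (gmulVg _ g x), gmulA, mulgV', gmul1g. reflexivity. Qed.

Lemma invol_inv t : t ** t = 1 -> inv t = t.
Proof.
  intro H. rewrite <- (mulg1' (inv t)), <- H, gmulA, gmulVg, gmul1g. reflexivity.
Qed.

Definition decomp6 := forall x, exists t1 t2 t3 t4 t5 t6,
  t1 ** t1 = 1 /\ t2 ** t2 = 1 /\ t3 ** t3 = 1 /\ t4 ** t4 = 1 /\ t5 ** t5 = 1 /\ t6 ** t6 = 1 /\
  x = (((((t1 ** t2) ** t3) ** t4) ** t5) ** t6).

Lemma step_bound (f : T -> R) (e m : R) y t :
  (forall x t, t ** t = 1 -> Rabs (f (x ** t) - f x) <= e) ->
  Rabs (f y - f 1) <= m -> t ** t = 1 -> Rabs (f (y ** t) - f 1) <= m + e.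
Proof.
  intros He Hy Ht. specialize (He y t Ht). revert He Hy.
  unfold Rabs; repeat destruct Rcase_abs; lra.
Qed.

Lemma bound6 (f : T -> R) (e : R) : decomp6 ->
  (forall x t, t ** t = 1 -> Rabs (f (x ** t) - f x) <= e) ->
  forall x, Rabs (f x - f 1) <= 6 * e.
Proof.
  intros D He x. destruct (D x) as (t1 & t2 & t3 & t4 & t5 & t6 & H1 & H2 & H3 & H4 & H5 & H6 & ->).
  assert (H0 : Rabs (f 1 - f 1) <= 0) by (rewrite Rminus_diag, Rabs_R0; lra).
  pose proof (step_bound f e 0 1 t1 He H0 H1) as S1. rewrite gmul1g in S1.
  pose proof (step_bound f e _ _ t2 He S1 H2) as S2.
  pose proof (step_bound f e _ _ t3 He S2 H3) as S3.
  pose proof (step_bound f e _ _ t4 He S3 H4) as S4.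
  pose proof (step_bound f e _ _ t5 He S4 H5) as S5.
  pose proof (step_bound f e _ _ t6 He S5 H6) as S6.
  revert S6. lra.
Qed.

Lemma qj_invol f : quasi_Jensen g f -> exists c, 0 < c /\
  forall x t, t ** t = 1 -> Rabs (f (x ** t) - f x) <= c / 2.
Proof.
  intros [c [Hc H]]. exists c; split; auto. intros x t Ht.
  specialize (H x t). rewrite (invol_inv t Ht) in H. revert H.
  unfold Rabs; repeat destruct Rcase_abs; lra.
Qed.

Lemma zero_of_invariant f : decomp6 ->
  (forall x t, t ** t = 1 -> f (x ** t) = f x) -> f 1 = 0 -> forall x, f x = 0.
Proof.
  intros D H H1 x. pose proof (bound6 f 0 D) as B.
  assert (B' : Rabs (f x - f 1) <= 6 * 0).
  { apply B. intros y t Ht. rewrite H by auto. rewrite Rminus_diag, Rabs_R0; lra. }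
  revert B'. rewrite H1. unfold Rabs; repeat destruct Rcase_abs; lra.
Qed.

Lemma all_zero f : decomp6 ->
  (pseudo_Jensen g f \/ J0 g f \/ X_hom g f) -> forall x, f x = 0.
Proof.
  intros D [[Hq Hp] | [[HJ H1] | HX]].
  - destruct (qj_invol f Hq) as [c [Hc Hb]].
    pose proof (bound6 f _ D Hb) as B.
    intro x. destruct (Req_dec (f x) 0) as [E|E]; auto. exfalso.
    set (M := Rabs (f 1) + 6 * (c/2)).
    assert (HM : forall y, Rabs (f y) <= M).
    { intro y. specialize (B y). revert B. unfold M. unfold Rabs; repeat destruct Rcase_abs; lra. }
    assert (Hpos : 0 < Rabs (f x)) by (apply Rabs_pos_lt; auto).
    destruct (archimed (M / Rabs (f x))) as [Hup _].
    set (n := up (M / Rabs (f x))) in *.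
    specialize (HM (gpow g x n)). rewrite Hp, Rabs_mult in HM.
    assert (Hn : M / Rabs (f x) * Rabs (f x) = M) by (field; lra).
    assert (0 <= M / Rabs (f x)).
    { apply Rle_trans with (Rabs (f 1) / Rabs (f x)).
      - apply Rmult_le_pos; [apply Rabs_pos | left; apply Rinv_0_lt_compat; auto].
      - unfold Rdiv. apply Rmult_le_compat_r; [left; apply Rinv_0_lt_compat; auto|]. unfold M; lra. }
    rewrite Rabs_right in HM by lra.
    assert (IZR n * Rabs (f x) > M / Rabs (f x) * Rabs (f x)) by (apply Rmult_gt_compat_r; lra).
    lra.
  - apply zero_of_invariant; auto. intros x t Ht.
    specialize (HJ x t). rewrite (invol_inv t Ht) in HJ. lra.
  - assert (H1 : f 1 = 0) by (specialize (HX 1 1); rewrite gmul1g in HX; lra).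
    apply zero_of_invariant; auto. intros x t Ht.
    assert (f t = 0) by (pose proof (HX t t) as E; rewrite Ht in E; lra).
    rewrite HX; lra.
Qed.

Lemma zero_props : pseudo_Jensen g (fun _ => 0) /\ J0 g (fun _ => 0) /\ X_hom g (fun _ => 0).
Proof.
  split; [split|split; [split|]].
  - exists R1; split; [lra|]. intros; rewrite Rabs_right; lra.
  - intros; ring.
  - intros; ring.
  - reflexivity.
  - unfold X_hom; intros; ring.
Qed.

End GL.

Open Scope Z_scope.
Section Wr.
Context {A : Type} (gA : group_on A).

Record GE := MkGE { hf : Z -> A; ef : bool; kf : Z }.

Definition dmap (e : bool) (k n : Z) := if e then k - n else k + n.
Definition dinv (e : bool) (k n : Z) := if e then k - n else n - k.

Definition Gmul (x y : GE) : GE :=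
  MkGE (fun n => gmul gA (hf x n) (hf y (dinv (ef x) (kf x) n)))
       (xorb (ef x) (ef y)) (dmap (ef x) (kf x) (kf y)).
Definition Gone : GE := MkGE (fun _ => gone gA) false 0.
Definition Ginv (x : GE) : GE :=
  MkGE (fun n => ginv gA (hf x (dmap (ef x) (kf x) n))) (ef x)
       (if ef x then kf x else - kf x).

Lemma GE_ext (x y : GE) : (forall n, hf x n = hf y n) -> ef x = ef y -> kf x = kf y -> x = y.
Proof.
  destruct x, y; simpl; intros H -> ->. f_equal. apply functional_extensionality; auto.
Qed.

Lemma GmulA x y z : Gmul x (Gmul y z) = Gmul (Gmul x y) z.
Proof.
  destruct x as [h1 e1 k1], y as [h2 e2 k2], z as [h3 e3 k3].
  apply GE_ext; simpl.
  - intro n. rewrite gmulA. f_equal. f_equal.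
    destruct e1, e2; simpl; unfold dinv, dmap; lia.
  - destruct e1, e2, e3; reflexivity.
  - destruct e1, e2; unfold dmap; simpl; lia.
Qed.

Lemma Gmul1g x : Gmul Gone x = x.
Proof.
  destruct x as [h e k]. apply GE_ext; simpl.
  - intro n. rewrite gmul1g. f_equal. unfold dinv; simpl; lia.
  - reflexivity.
  - unfold dmap; lia.
Qed.

Lemma GmulVg x : Gmul (Ginv x) x = Gone.
Proof.
  destruct x as [h e k]. apply GE_ext; simpl.
  - intro n. replace (dinv e (if e then k else - k) n) with (dmap e k n)
      by (destruct e; unfold dinv, dmap; lia).
    apply gmulVg.
  - destruct e; reflexivity.
  - destruct e; unfold dmap; lia.
Qed.

Definition Ggroup : group_on GE := GroupOn GE Gmul Gone Ginv GmulA Gmul1g GmulVg.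

Definition phi (a : A) : GE := MkGE (fun _ => a) false 0.

Lemma phi_inj a b : phi a = phi b -> a = b.
Proof. intro H. exact (f_equal (fun x => hf x 0) H). Qed.

Lemma phi_hom : group_hom gA Ggroup phi.
Proof. intros a b. apply GE_ext; reflexivity. Qed.

Section Integ.
Variable h : Z -> A.
Fixpoint gp (m : nat) : A := match m with O => gone gA | S m' => gmul gA (h (Z.of_nat (S m'))) (gp m') end.
Fixpoint gn (m : nat) : A := match m with O => gone gA | S m' => gmul gA (ginv gA (h (- Z.of_nat m'))) (gn m') end.
Definition gi (z : Z) : A := if 0 <=? z then gp (Z.to_nat z) else gn (Z.to_nat (- z)).

Lemma gi_neg z : z <= 0 -> gi z = gn (Z.to_nat (- z)).
Proof.
  intro H. unfold gi. destruct (Z.leb_spec 0 z); auto.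
  assert (z = 0) by lia. subst. reflexivity.
Qed.

Lemma gi_rec n : gi n = gmul gA (h n) (gi (n - 1)).
Proof.
  destruct (Z_le_gt_dec n 0) as [Hn|Hn].
  - rewrite (gi_neg n Hn), (gi_neg (n-1)) by lia.
    replace (Z.to_nat (- (n - 1))) with (S (Z.to_nat (- n))) by lia. simpl.
    rewrite Z2Nat.id by lia. rewrite Z.opp_involutive.
    rewrite gmulA, mulgV', gmul1g. reflexivity.
  - unfold gi. destruct (Z.leb_spec 0 n); [|lia]. destruct (Z.leb_spec 0 (n-1)); [|lia].
    replace (Z.to_nat n) with (S (Z.to_nat (n - 1))) by lia. simpl.
    f_equal. f_equal. lia.
Qed.
End Integ.

Definition Iv (u : Z -> A) (a : Z) := MkGE u true a.

Lemma Iv_invol u a : (forall n, gmul gA (u n) (u (a - n)) = gone gA) -> Gmul (Iv u a) (Iv u a) = Gone.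
Proof.
  intro H. apply GE_ext; simpl; auto. unfold dmap; lia.
Qed.

Definition rr (k : Z) := Iv (fun _ => gone gA) k.
Lemma rr_invol k : Gmul (rr k) (rr k) = Gone.
Proof. apply Iv_invol. intro; apply gmul1g. Qed.

Lemma Gone_invol : Gmul Gone Gone = Gone.
Proof. apply Gmul1g. Qed.

Lemma uI_invol (gg : Z -> A) a :
  Gmul (Iv (fun n => gmul gA (gg n) (ginv gA (gg (a - n)))) a)
       (Iv (fun n => gmul gA (gg n) (ginv gA (gg (a - n)))) a) = Gone.
Proof.
  apply Iv_invol. intro n. replace (a - (a - n)) with n by lia.
  rewrite <- !gmulA, (gmulA _ gA (ginv gA (gg (a - n)))), gmulVg, gmul1g, mulgV'. reflexivity.
Qed.

Lemma G_decomp6 : decomp6 Ggroup.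
Proof.
  intros [h e k]. set (gg := gi h).
  exists (Iv (fun n => gmul gA (gg n) (ginv gA (gg (1 - n)))) 1),
         (Iv (fun n => gmul gA (gg n) (ginv gA (gg (0 - n)))) 0),
         (rr 0), (rr 1), (rr k), (if e then Gone else rr 0).
  split; [apply uI_invol|]. split; [apply uI_invol|].
  split; [apply rr_invol|]. split; [apply rr_invol|]. split; [apply rr_invol|].
  split; [destruct e; [apply Gone_invol | apply rr_invol]|].
  apply GE_ext.
    + intro n. destruct e; unfold Ggroup, Gmul, rr, Iv, Gone; cbn [hf ef kf xorb gmul]; rewrite !mulg1'; unfold dinv;
      replace (0 - (1 - n)) with (n - 1) by lia;
      rewrite <- gmulA, (gmulA _ gA (ginv gA (gg (1 - n)))), gmulVg, gmul1g;
      unfold gg; rewrite (gi_rec h n), <- gmulA, mulgV', mulg1'; reflexivity.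
    + destruct e; reflexivity.
    + destruct e; simpl; unfold dmap; lia.
Qed.

End Wr.

Open Scope R_scope.

Theorem theorem4p1 (A : Type) (gA : group_on A) :
  exists (G : Type) (gG : group_on G) (phi : A -> G),
    (forall a b, phi a = phi b -> a = b) /\ group_hom gA gG phi /\
    (forall f : G -> R, (pseudo_Jensen gG f <-> J0 gG f) /\ (J0 gG f <-> X_hom gG f)) /\
    (forall f : G -> R, quasi_Jensen gG f ->
       exists j : G -> R, is_Jensen gG j /\ bounded_fun (fun x => j x - f x)).
Proof.
  exists (GE (A:=A)), (Ggroup gA), (phi (A:=A)).
  pose proof (G_decomp6 gA) as D.
  destruct (zero_props (Ggroup gA)) as (Z1 & Z2 & Z3).
  assert (Zf : forall f : GE (A:=A) -> R, (forall x, f x = 0) -> f = (fun _ => 0)).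
  { intros f H; apply functional_extensionality; auto. }
  split; [apply phi_inj|]. split; [apply phi_hom|]. split.
  - intro f. split; split; intro H.
    + rewrite (Zf f (all_zero _ f D (or_introl H))); auto.
    + rewrite (Zf f (all_zero _ f D (or_intror (or_introl H)))); auto.
    + rewrite (Zf f (all_zero _ f D (or_intror (or_introl H)))); auto.
    + rewrite (Zf f (all_zero _ f D (or_intror (or_intror H)))); auto.
  - intros f Hq. exists (fun _ => 0). split.
    + intros x y; ring.
    + destruct (qj_invol _ f Hq) as [c [Hc Hb]].
      pose proof (bound6 _ f _ D Hb) as B.
      exists (Rabs (f (gone (Ggroup gA))) + 6 * (c / 2)). intro x.
      specialize (B x). revert B. unfold Rabs; repeat destruct Rcase_abs; lra.
Qed.
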